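(* Let $g,p,q$ be real univariate polynomials with $\deg(g)=m$, $\deg(p)=2d$ and $\deg(q)=2d-2m$, such that $p$ and $q$ are sums of squares and $g$ and $q$ are coprime. Then there exists a sum of squares polynomial $s\in\Sigma[x]_{2m}$ such that $p\equiv sq\pmod g$.
   Context: $\Sigma[x]_{2m}$ denotes the cone of real univariate polynomials of degree at most $2m$ that are sums of squares of real polynomials (of degree at most $m$). $a\equiv b\pmod g$ means $a=b+wg$ for some real polynomial $w$. Coprime means the greatest common divisor is a constant. *)

(* Defs.v *)
From HB Require Import structures.
From mathcomp Require Import all_boot all_order all_algebra.
From mathcomp Require Export reals.
Set Implicit Arguments. Unset Strict Implicit. Unset Printing Implicit Defensive.
Import Order.TTheory GRing.Theory Num.Theory.
Local Open Scope ring_scope.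

Definition is_sos (R : realType) (p : {poly R}) : Prop :=
  exists l : seq {poly R}, p = \sum_(h <- l) h ^+ 2.

Definition sos_deg (R : realType) (m : nat) (s : {poly R}) : Prop :=
  (size s <= (2 * m).+1)%N /\
  exists l : seq {poly R},
    all (fun h : {poly R} => (size h <= m.+1)%N) l /\ s = \sum_(h <- l) h ^+ 2.

(* Main.v *)
Require Import Defs.
From HB Require Import structures.
From mathcomp Require Import all_boot all_order all_algebra.
From mathcomp Require Import reals.
From mathcomp Require Import ring zify.
Import Order.TTheory GRing.Theory Num.Theory.
Local Open Scope ring_scope.

Lemma dvd_sq_mod (R : realType) (g k : {poly R}) : g %| k ^+ 2 - (k %% g) ^+ 2.
Proof.
have e : k ^+ 2 - (k %% g) ^+ 2 = (k %/ g * g) * (k + k %% g).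
  have E := divp_eq k g.
  move: (k %/ g) (k %% g) E => c r ->; ring.
by rewrite e; apply: dvdp_mulr; apply: dvdp_mull; apply: dvdpp.
Qed.

Theorem lemma3p9 (R : realType) (m d : nat) (g p q : {poly R}) :
  (m <= d)%N ->
  size g = m.+1 ->
  size p = (2 * d).+1 ->
  size q = (2 * d - 2 * m).+1 ->
  is_sos p -> is_sos q ->
  coprimep g q ->
  exists s : {poly R}, sos_deg m s /\ exists w : {poly R}, p = s * q + w * g.
Proof.
move=> _ hg _ _ [lp ->] [lq ->] /Bezout_eq1_coprimepP [[u t] /= hb].
set P := \sum_(h <- lp) h ^+ 2.
set Q := \sum_(h <- lq) h ^+ 2.
have g0 : g != 0 by rewrite -size_poly_eq0 hg.
set L := [seq f * h * t | f <- lp, h <- lq].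
set s := \sum_(k <- L) (k %% g) ^+ 2.
have hS : \sum_(k <- L) k ^+ 2 = P * Q * t ^+ 2.
  rewrite /L big_allpairs_dep /P /Q !mulr_suml; apply: eq_bigr => f _.
  rewrite mulr_sumr mulr_suml; apply: eq_bigr => h _.
  by rewrite !exprMn.
exists s; split.
  split.
    rewrite /s; apply: (big_ind (fun x : {poly R} => (size x <= (2 * m).+1)%N)).
    - by rewrite size_poly0.
    - move=> x y hx hy; apply: leq_trans (size_add _ _) _.
      by rewrite geq_max hx hy.
    - move=> k _; apply: leq_trans (size_mul_leq _ _) _.
      have := ltn_modpN0 k g0; rewrite hg => hk.
      rewrite ltnS in hk; apply: leq_trans (leq_pred _) _. apply: leq_trans (leq_add hk hk) _; lia.
  exists [seq k %% g | k <- L]; split.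
    rewrite all_map; apply/allP => k _ /=; have := ltn_modpN0 k g0; rewrite hg; exact: ltnW.
  by rewrite big_map.
have hd : g %| P - s * Q.
  have e : P - s * Q = P * (u * g) * (1 + t * Q)
      + (\sum_(k <- L) k ^+ 2 - s) * Q.
    rewrite hS -[u * g](addrK (t * Q)) hb; ring.
  rewrite e; apply: dvdp_add.
    by apply: dvdp_mulr; apply: dvdp_mull; apply: dvdp_mull; apply: dvdpp.
  apply: dvdp_mulr; rewrite /s -sumrB.
  apply: (big_ind (fun x => g %| x)); [exact: dvdp0| exact: dvdp_add|].
  by move=> k _; apply: dvd_sq_mod.
exists ((P - s * Q) %/ g); rewrite divpK //; by rewrite addrC subrK.
Qed.
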